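(* Let $G$ be a graph and $H$ a subgraph of $G$ with well-connected adhesion sets. Then any rooted subtree of $H$ that is normal in $H$ is also normal in $G$.
   Context: For distinct vertices $v,w$, $\kappa_H(v,w)$ denotes the largest size of a family of pairwise internally disjoint $v$–$w$ paths in $H$. For a subgraph $H \subseteq G$, an $H$-path in $G$ is a path with at least one edge whose endvertices lie in $H$ and whose edges and inner vertices lie outside $H$. $H$ has well-connected adhesion sets (in $G$) if the endvertices of every $H$-path in $G$ have infinite connectivity $\kappa_H$ in $H$. A rooted tree $T$ in a graph $K$ (tree order: $x\le y$ iff $x$ lies on the root–$y$ path in $T$) is normal in $K$ if the endvertices of every $T$-path in $K$ are comparable in the tree order. *)

(* Defs.v *)
From Stdlib Require Import List.
Import ListNotations.
Set Implicit Arguments.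

Record graph (V : Type) := Graph { vtx : V -> Prop; edg : V -> V -> Prop }.
Arguments vtx {V} g _.
Arguments edg {V} g _ _.

Section Defs.
Variable V : Type.

Definition wf_graph (K : graph V) : Prop :=
  (forall x y, edg K x y -> edg K y x) /\
  (forall x, ~ edg K x x) /\
  (forall x y, edg K x y -> vtx K x /\ vtx K y).

Definition subgraph (H K : graph V) : Prop :=
  (forall x, vtx H x -> vtx K x) /\ (forall x y, edg H x y -> edg K x y).

Fixpoint chain (R : V -> V -> Prop) (p : list V) : Prop :=
  match p with
  | x :: ((y :: _) as t) => R x y /\ chain R t
  | _ => True
  end.

Definition is_path (K : graph V) (p : list V) : Prop :=
  p <> [] /\ NoDup p /\ Forall (vtx K) p /\ chain (edg K) p.

Definition ends (p : list V) (a b : V) : Prop :=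
  hd_error p = Some a /\ last p a = b.

Definition inner (p : list V) : list V := removelast (tl p).

Definition H_path (G H : graph V) (p : list V) : Prop :=
  is_path G p /\ 2 <= length p /\
  (forall a b, ends p a b -> vtx H a /\ vtx H b) /\
  (forall x, In x (inner p) -> ~ vtx H x) /\
  chain (fun x y => ~ edg H x y) p.

(* kappa_H(v,w) is infinite: there is an infinite family of distinct,
   pairwise internally disjoint v-w paths in H *)
Definition kappa_infinite (H : graph V) (v w : V) : Prop :=
  exists f : nat -> list V,
    (forall i, is_path H (f i) /\ ends (f i) v w) /\
    (forall i j, i <> j ->
       f i <> f j /\ (forall x, In x (inner (f i)) -> ~ In x (inner (f j)))).

Definition well_connected_adhesion (G H : graph V) : Prop :=
  forall p a b, H_path G H p -> ends p a b -> kappa_infinite H a b.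

Definition connected (T : graph V) : Prop :=
  forall x y, vtx T x -> vtx T y -> exists p, is_path T p /\ ends p x y.

Definition is_cycle (T : graph V) (p : list V) : Prop :=
  is_path T p /\ 3 <= length p /\
  (forall a b, ends p a b -> edg T b a).

Definition is_tree (T : graph V) : Prop :=
  connected T /\ forall p, ~ is_cycle T p.

Definition tree_le (T : graph V) (r x y : V) : Prop :=
  exists p, is_path T p /\ ends p r y /\ In x p.

Definition comparable (T : graph V) (r x y : V) : Prop :=
  tree_le T r x y \/ tree_le T r y x.

Definition normal_in (K T : graph V) (r : V) : Prop :=
  forall p a b, H_path K T p -> ends p a b -> comparable T r a b.

End Defs.

(* Main.v *)
Require Import Defs.
From Stdlib Require Import List Classical Lia.
Import ListNotations.
Set Implicit Arguments.


Section L.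
Variable V : Type.

Lemma last_cons_d (y x : V) l : last (y :: l) x = last l y.
Proof.
  revert y x; induction l as [|a l IH]; intros y x. reflexivity.
  change (last (a :: l) x = last (a :: l) y). rewrite !IH. reflexivity.
Qed.

Lemma last_app_gen (l1 l2 : list V) d : last (l1 ++ l2) d = last l2 (last l1 d).
Proof.
  revert d; induction l1 as [|a l1 IH]; intro d; simpl. reflexivity.
  change (last (a :: (l1 ++ l2)) d = last l2 (last (a :: l1) d)).
  rewrite !last_cons_d. apply IH.
Qed.

Lemma last_indep (l : list V) d d' : l <> [] -> last l d = last l d'.
Proof. destruct l as [|a l]; [congruence|]. intros _. rewrite !last_cons_d. reflexivity. Qed.

Lemma last_in (l : list V) d : l <> [] -> In (last l d) l.
Proof.
  revert d; induction l as [|a l IH]; intros d H; [congruence|].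
  rewrite last_cons_d. destruct l as [|b l]. simpl; auto. right. apply IH. congruence.
Qed.

Lemma last_in_cons (l : list V) d : In (last l d) (d :: l).
Proof. destruct l as [|a l]. simpl; auto. right. apply last_in. congruence. Qed.

Lemma chain_app_l (R : V -> V -> Prop) l1 l2 : chain R (l1 ++ l2) -> chain R l1.
Proof.
  induction l1 as [|a l1 IH]; simpl; auto.
  destruct l1 as [|b l1]; simpl; auto. intros [H1 H2]. split; auto. apply IH. exact H2.
Qed.

Lemma chain_app_r (R : V -> V -> Prop) l1 l2 : chain R (l1 ++ l2) -> chain R l2.
Proof.
  induction l1 as [|a l1 IH]; simpl; auto.
  destruct l1 as [|b l1]; simpl. destruct l2; simpl; tauto. intros [H1 H2]. auto.
Qed.

Lemma chain_app2 (R : V -> V -> Prop) l1 l2 d : l1 <> [] ->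
  chain R l1 -> chain R (last l1 d :: l2) -> chain R (l1 ++ l2).
Proof.
  induction l1 as [|a l1 IH]; intros Hn; [congruence|].
  destruct l1 as [|b l1]; simpl.
  - destruct l2; simpl; tauto.
  - intros [H1 H2] H3. split; auto. apply IH; [congruence|exact H2|exact H3].
Qed.

Lemma chain_mono (R S : V -> V -> Prop) l : (forall x y, R x y -> S x y) -> chain R l -> chain S l.
Proof.
  intro HRS; induction l as [|a l IH]; simpl; auto.
  destruct l as [|b l]; auto. intros [H1 H2]; split; auto.
Qed.

Lemma chain_in (R : V -> V -> Prop) l : chain R l -> chain (fun x y => R x y /\ In x l /\ In y l) l.
Proof.
  intro H. assert (G : forall l0, chain R l0 -> (forall z, In z l0 -> In z l) ->
     chain (fun x y => R x y /\ In x l /\ In y l) l0).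
  { induction l0 as [|a l0 IH]; simpl; auto.
    destruct l0 as [|b l0]; simpl; auto. intros [H1 H2] Hi.
    split. split; [exact H1|split; apply Hi; simpl; auto].
    apply IH; [exact H2|]. intros z Hz; apply Hi; simpl; auto. }
  apply G; auto.
Qed.

Lemma chain_rev (R : V -> V -> Prop) l : (forall x y, R x y -> R y x) -> chain R l -> chain R (rev l).
Proof.
  intro Hs; induction l as [|a l IH]; simpl; auto.
  destruct l as [|b l]; simpl; auto. intros [H1 H2].
  specialize (IH H2). simpl in IH.
  apply chain_app2 with (d := a). destruct (rev l); simpl; congruence. exact IH.
  rewrite last_app_gen. simpl. split; auto.
Qed.

Lemma chain_mid (P : V -> Prop) x mid y : mid <> [] -> Forall P mid ->
  chain (fun u v => P u \/ P v) (x :: mid ++ [y]).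
Proof.
  revert x; induction mid as [|m mid IH]; intros x Hn HF; [congruence|].
  inversion HF; subst. simpl. split; auto.
  destruct mid as [|m' mid]. simpl; auto.
  specialize (IH m ltac:(congruence) H2). simpl in IH. exact IH.
Qed.

Lemma nodup_last_notin (l : list V) t : NoDup (l ++ [t]) -> ~ In t l.
Proof.
  induction l as [|a l IH]; simpl; auto.
  intros Hn [Ha|Hi]; inversion Hn; subst. apply H1. apply in_or_app; simpl; auto.
  apply IH; auto.
Qed.

Lemma first_split (P : V -> Prop) l : (exists y, In y l /\ P y) ->
  exists a z b, l = a ++ z :: b /\ P z /\ Forall (fun w => ~ P w) a.
Proof.
  induction l as [|x l IH]; intros [y [Hy Py]]. destruct Hy.
  destruct (classic (P x)) as [Px|nPx].
  - exists [], x, l. auto.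
  - destruct Hy as [->|Hy]. contradiction.
    destruct IH as [a [z [b [E [Pz Fa]]]]]. eauto.
    exists (x :: a), z, b. subst. auto.
Qed.

Definition pre (l1 l2 : list V) := exists k, l2 = l1 ++ k.

Lemma pre_trans l1 l2 l3 : pre l1 l2 -> pre l2 l3 -> pre l1 l3.
Proof. intros [k1 ->] [k2 ->]. exists (k1 ++ k2). rewrite app_assoc. auto. Qed.

Lemma pre_comp l1 l2 l : pre l1 l -> pre l2 l -> pre l1 l2 \/ pre l2 l1.
Proof.
  intros [k1 E1] [k2 E2]. rewrite E1 in E2. apply app_eq_app in E2.
  destruct E2 as [m [[-> _]|[-> _]]]. right; exists m; auto. left; exists m; auto.
Qed.

Lemma not_pre_split l1 l2 : ~ pre l1 l2 -> ~ pre l2 l1 ->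
  exists cp a b r1 r2, l1 = cp ++ a :: r1 /\ l2 = cp ++ b :: r2 /\ a <> b.
Proof.
  revert l2; induction l1 as [|x l1 IH]; intros l2 H1 H2.
  - exfalso; apply H1; exists l2; auto.
  - destruct l2 as [|y l2]. exfalso; apply H2; exists (x :: l1); auto.
    destruct (classic (x = y)) as [<-|Hne].
    + destruct (IH l2) as [cp [a [b [r1 [r2 [E1 [E2 Hab]]]]]]].
      intros [k Hk]; apply H1; exists k; subst; auto.
      intros [k Hk]; apply H2; exists k; subst; auto.
      exists (x :: cp), a, b, r1, r2. subst. auto.
    + exists [], x, y, l1, l2. auto.
Qed.

Lemma in_ends (p : list V) a b z : ends p a b -> In z p -> z = a \/ z = b \/ In z (inner p).
Proof.
  intros [Hh Hl] Hz. destruct p as [|x p]; [discriminate|]. simpl in Hh. injection Hh as ->.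
  destruct Hz as [->|Hz]; auto. unfold inner; simpl.
  rewrite last_cons_d in Hl.
  assert (Hn : p <> []) by (intro; subst; destruct Hz).
  rewrite (app_removelast_last a Hn) in Hz. rewrite Hl in Hz.
  apply in_app_or in Hz. destruct Hz as [Hz|[->|[]]]; auto.
Qed.

End L.

Section Tr.
Variable V : Type.
Variable T : graph V.
Hypothesis wfT : wf_graph T.
Hypothesis treeT : is_tree T.

Lemma is_path_tl (K : graph V) x p : p <> [] -> is_path K (x :: p) -> is_path K p.
Proof.
  intros Hn [_ [Hd [Hf Hc]]]. split; auto. split. inversion Hd; auto.
  split. inversion Hf; auto. destruct p; [congruence|]. simpl in Hc. tauto.
Qed.

Lemma is_path_pre (K : graph V) l1 l2 : l1 <> [] -> is_path K (l1 ++ l2) -> is_path K l1.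
Proof.
  intros Hn [_ [Hd [Hf Hc]]]. split; auto. split. eapply NoDup_app_remove_r; eauto.
  split. apply Forall_app in Hf; tauto. eapply chain_app_l; eauto.
Qed.

Lemma uniq_path : forall p1 p2 u x, is_path T p1 -> is_path T p2 ->
  ends p1 u x -> ends p2 u x -> p1 = p2.
Proof.
  induction p1 as [|u0 p1 IH]; intros p2 u x P1 P2 [E1 L1] [E2 L2].
  { destruct P1; congruence. }
  destruct p2 as [|u1 p2]; [destruct P2; congruence|].
  simpl in E1, E2. injection E1 as ->. injection E2 as ->.
  rewrite last_cons_d in L1, L2.
  destruct p1 as [|v1 q1]; destruct p2 as [|v2 q2].
  - reflexivity.
  - exfalso. simpl in L1. rewrite <- L1 in L2; clear L1. destruct P2 as [_ [Hd _]]. inversion Hd; subst.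
    apply H1. pose proof (@last_in V (v2::q2) u ltac:(congruence)) as Hl; rewrite L2 in Hl; exact Hl.
  - exfalso. simpl in L2. rewrite <- L2 in L1; clear L2. destruct P1 as [_ [Hd _]]. inversion Hd; subst.
    apply H1. pose proof (@last_in V (v1::q1) u ltac:(congruence)) as Hl; rewrite L1 in Hl; exact Hl.
  - destruct (classic (v1 = v2)) as [<-|Hne].
    + f_equal. apply (IH (v1 :: q2) v1 x).
      eapply is_path_tl; eauto; congruence. eapply is_path_tl; eauto; congruence.
      split; auto. rewrite <- L1. apply last_indep; congruence.
      split; auto. rewrite <- L2. apply last_indep; congruence.
    + exfalso. destruct treeT as [_ Hcyc].
      set (p1 := v1 :: q1) in *. set (p2 := v2 :: q2) in *.
      assert (Hx1 : In x p1) by (rewrite <- L1; apply last_in; unfold p1; congruence).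
      assert (Hx2 : In x p2) by (rewrite <- L2; apply last_in; unfold p2; congruence).
      destruct (@first_split V (fun w => In w p2) p1) as [al [z [be [Ep1 [Hz Fal]]]]]; eauto.
      destruct (in_split _ _ Hz) as [ga [de Ep2]].
      destruct P1 as [_ [D1 [F1 C1]]]. destruct P2 as [_ [D2 [F2 C2]]].
      rewrite Forall_forall in F1, F2, Fal.
      apply (Hcyc (u :: al ++ z :: rev ga)).
      assert (Hu1 : ~ In u p1) by (inversion D1; auto).
      assert (Hu2 : ~ In u p2) by (inversion D2; auto).
      assert (Hin1 : forall w, In w (al ++ [z]) -> In w p1).
      { intros w Hw. rewrite Ep1. apply in_app_or in Hw. apply in_or_app. simpl in *. tauto. }
      assert (Hin2 : forall w, In w (ga ++ [z]) -> In w p2).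
      { intros w Hw. rewrite Ep2. apply in_app_or in Hw. apply in_or_app. simpl in *. tauto. }
      split; [split; [congruence|split; [|split]]|split].
      * constructor.
        { intro Hw. apply in_app_or in Hw. destruct Hw as [Hw|[<-|Hw]].
          apply Hu1, Hin1, in_or_app; auto. apply Hu1, Hin1, in_or_app; simpl; auto.
          apply Hu2, Hin2, in_or_app; left; apply in_rev; auto. }
        change (z :: rev ga) with ([z] ++ rev ga). rewrite app_assoc.
        apply NoDup_app.
        { inversion D1; subst. rewrite Ep1 in H2.
          eapply NoDup_app_remove_r with (l' := be). rewrite <- app_assoc. exact H2. }
        { apply NoDup_rev. inversion D2; subst. rewrite Ep2 in H2. eapply NoDup_app_remove_r. exact H2. }
        { intros w Hw Hw'. apply in_rev in Hw'. apply in_app_or in Hw. destruct Hw as [Hw|[<-|[]]].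
          apply (Fal w Hw). apply Hin2, in_or_app; auto.
          assert (NoDup (ga ++ [z])). { inversion D2; subst. rewrite Ep2 in H2.
            eapply NoDup_app_remove_r with (l' := de). rewrite <- app_assoc. exact H2. }
          eapply nodup_last_notin; eauto. }
      * apply Forall_forall. intros w Hw. destruct Hw as [<-|Hw].
        destruct wfT as [_ [_ Hv]]. apply (Hv u v1). simpl in C1; tauto.
        apply in_app_or in Hw. destruct Hw as [Hw|[<-|Hw]].
        apply F1; right; apply Hin1, in_or_app; auto. apply F1; right; apply Hin1, in_or_app; simpl; auto.
        apply F2; right; apply Hin2, in_or_app; left; apply in_rev; auto.
      * replace (u :: al ++ z :: rev ga) with ((u :: al ++ [z]) ++ rev ga)
          by (simpl; rewrite <- app_assoc; reflexivity).
        apply chain_app2 with (d := u). congruence.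
        { change (chain (edg T) (u :: p1)) in C1. rewrite Ep1 in C1.
          replace (u :: al ++ z :: be) with ((u :: al ++ [z]) ++ be) in C1
            by (simpl; rewrite <- app_assoc; reflexivity).
          apply chain_app_l in C1. exact C1. }
        rewrite last_cons_d, last_app_gen. change (last [z] (last al u)) with z.
        rewrite <- rev_unit. apply chain_rev. apply wfT.
        assert (C2' := @chain_app_r V _ [u] p2 C2). rewrite Ep2 in C2'.
        replace (ga ++ z :: de) with ((ga ++ [z]) ++ de) in C2' by (rewrite <- app_assoc; reflexivity).
        apply chain_app_l in C2'. exact C2'.
      * simpl. rewrite length_app. simpl. destruct al as [|a1 al]; destruct ga as [|g1 ga]; simpl; rewrite ?length_app, ?length_rev; simpl; try lia.
        exfalso. simpl in Ep1, Ep2. unfold p1, p2 in *. congruence.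
      * intros a b [Ha Hb]. simpl in Ha. injection Ha as <-.
        assert (Hb2 : b = v2).
        { rewrite <- Hb. rewrite last_cons_d. destruct ga as [|g1 ga].
          simpl. rewrite last_app_gen. simpl. unfold p2 in Ep2. simpl in Ep2. congruence.
          unfold p2 in Ep2. simpl in Ep2. injection Ep2 as <- _. simpl.
          rewrite app_comm_cons, app_assoc, last_last. reflexivity. }
        rewrite Hb2. apply wfT. simpl in C2. tauto.
Qed.

Variable r : V.
Definition Pth x l := is_path T l /\ ends l r x.

Lemma Pth_in x l : Pth x l -> In x l.
Proof.
  intros [[Hn _] [_ Hl]]. rewrite <- Hl. apply last_in. exact Hn.
Qed.

Lemma Pth_pre x y l1 l2 : Pth y (l1 ++ x :: l2) -> Pth x (l1 ++ [x]).
Proof.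
  intros [P [Hh Hl]]. split.
  - apply is_path_pre with (l2 := l2). destruct l1; simpl; congruence.
    rewrite <- app_assoc. exact P.
  - split. destruct l1; simpl in *; auto. apply last_last.
Qed.

Lemma Pth_uniq x l1 l2 : Pth x l1 -> Pth x l2 -> l1 = l2.
Proof. intros [P1 E1] [P2 E2]. eapply uniq_path; eauto. Qed.

Lemma tle_pre x y lx ly : tree_le T r x y -> Pth x lx -> Pth y ly -> pre lx ly.
Proof.
  intros [p [P [E Hx]]] Px Py.
  assert (p = ly) by (eapply Pth_uniq; [split; eauto|exact Py]). subst p.
  destruct (in_split _ _ Hx) as [l1 [l2 ->]].
  assert (Hp : Pth x (l1 ++ [x])) by (eapply Pth_pre; eauto). rewrite (Pth_uniq Px Hp).
  exists l2. rewrite <- app_assoc. reflexivity.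
Qed.

Lemma pre_tle x y lx ly : Pth x lx -> Pth y ly -> pre lx ly -> tree_le T r x y.
Proof.
  intros Px Py [k ->]. exists (lx ++ k). destruct Py as [P E]. split; auto. split; auto.
  apply in_or_app. left. apply Pth_in; auto.
Qed.

Lemma edge_pre x y lx ly : edg T x y -> Pth x lx -> Pth y ly -> pre lx ly \/ pre ly lx.
Proof.
  intros He Px Py. destruct (classic (In y lx)) as [Hy|Hy].
  - right. destruct (in_split _ _ Hy) as [l1 [l2 E]]. rewrite E in Px.
    assert (Hp : Pth y (l1 ++ [y])) by (eapply Pth_pre; eauto). rewrite (Pth_uniq Py Hp). exists l2. rewrite E, <- app_assoc. reflexivity.
  - left. exists [y]. apply (Pth_uniq Py). destruct Px as [[Hn [Hd [Hf Hc]]] [Hh Hl]].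
    split; [split; [|split; [|split]]|split].
    + destruct lx; simpl; congruence.
    + apply NoDup_app; auto. repeat constructor; auto. intros a Ha [<-|[]]; auto.
    + apply Forall_app; split; auto. constructor; auto. apply wfT in He; tauto.
    + apply chain_app2 with (d := r); auto. rewrite Hl. simpl; auto.
    + destruct lx; simpl in *; congruence.
    + apply last_last.
Qed.

End Tr.

Section W.
Variable V : Type.

Lemma shortcut (R : V -> V -> Prop) : forall n w x, length w <= n -> chain R (x :: w) ->
  exists p, NoDup (x :: p) /\ chain R (x :: p) /\ last p x = last w x /\ incl p w.
Proof.
  induction n as [|n IH]; intros w x Hl Hc.
  - destruct w; [|simpl in Hl; lia]. exists []. repeat split; auto. constructor; auto. constructor.
    intros a [].
  - destruct (classic (In x w)) as [Hx|Hx].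
    + destruct (in_split _ _ Hx) as [w1 [w2 ->]].
      destruct (IH w2 x) as [p [Hd [Hc' [Hl' Hi]]]].
      rewrite length_app in Hl; simpl in Hl; lia.
      change (chain R ([x] ++ w1 ++ x :: w2)) in Hc. rewrite app_assoc in Hc.
      apply chain_app_r in Hc. exact Hc.
      exists p. repeat split; auto. rewrite Hl', last_app_gen, last_cons_d. reflexivity.
      intros a Ha. apply in_or_app. right. right. auto.
    + destruct w as [|y w]. exists []. repeat split; auto. constructor; auto. constructor. intros a [].
      change (R x y /\ chain R (y :: w)) in Hc. destruct Hc as [Hxy Hc].
      destruct (IH w y) as [p [Hd [Hc' [Hl' Hi]]]]. simpl in Hl; lia. exact Hc.
      exists (y :: p). repeat split.
      * constructor; auto. intro Hin. apply Hx. destruct Hin as [<-|Hin]. left; auto. right; auto.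
      * exact Hxy.
      * exact Hc'.
      * rewrite !last_cons_d. exact Hl'.
      * intros a [<-|Ha]. left; auto. right; auto.
Qed.

Variables G H T : graph V.
Variable r : V.
Hypothesis wfG : wf_graph G.
Hypothesis wfH : wf_graph H.
Hypothesis wfT : wf_graph T.
Hypothesis treeT : is_tree T.
Hypothesis normH : normal_in H T r.
Hypothesis rT : vtx T r.

Lemma Pth_ex x : vtx T x -> exists l, Pth T r x l.
Proof.
  intro Hx. destruct treeT as [Hc _]. destruct (Hc r x rT Hx) as [p [P E]]. exists p; split; auto.
Qed.

Lemma seg_pre u t mid lu lt : u <> t -> vtx T u -> vtx T t ->
  chain (edg H) (u :: mid ++ [t]) -> Forall (vtx H) (u :: mid ++ [t]) ->
  Forall (fun z => ~ vtx T z) mid -> Pth T r u lu -> Pth T r t lt ->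
  pre lu lt \/ pre lt lu.
Proof.
  intros Hne Hu Ht Hc Hf Hm Pu Pt.
  destruct (classic (edg T u t)) as [He|He].
  { eapply edge_pre; eauto. }
  destruct (@shortcut (edg H) _ (mid ++ [t]) u (le_n _) Hc) as [p [Hd [Hc' [Hl Hi]]]].
  rewrite last_app_gen in Hl. simpl in Hl.
  assert (Hpn : p <> []) by (intro; subst p; simpl in Hl; congruence).
  assert (Hcomp : comparable T r u t).
  { apply (@normH (u :: p) u t).
    - split; [split; [congruence|split; [exact Hd|split]]|split; [|split; [|split]]].
      + rewrite Forall_forall in Hf |- *. intros z [<-|Hz]. apply Hf; left; auto.
        apply Hf; right; apply Hi; auto.
      + exact Hc'.
      + destruct p; [congruence|]. simpl; lia.
      + intros a b [Ha Hb]. simpl in Ha. injection Ha as <-. rewrite last_cons_d, Hl in Hb. subst b. auto.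
      + intros z Hz. unfold inner in Hz. simpl in Hz.
        assert (Hzp : In z p) by (rewrite (app_removelast_last u Hpn); apply in_or_app; auto).
        apply Hi in Hzp. apply in_app_or in Hzp. destruct Hzp as [Hzm|[<-|[]]].
        rewrite Forall_forall in Hm; apply Hm; auto.
        exfalso. inversion Hd as [|? ? Hn1 Hn2]. rewrite (app_removelast_last u Hpn), Hl in Hn2.
        apply nodup_last_notin in Hn2. apply Hn2. exact Hz.
      + apply chain_mono with (R := fun x y => edg H x y /\ In x (u :: p) /\ In y (u :: p)).
        2: apply chain_in; exact Hc'.
        intros x y [Hxy [Hx Hy]] HT.
        assert (Hxy' : x <> y) by (intros ->; destruct wfH as [_ [Hl0 _]]; exact (Hl0 _ Hxy)).
        assert (HTx : vtx T x) by (apply wfT in HT; tauto).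
        assert (HTy : vtx T y) by (apply wfT in HT; tauto).
        assert (Hw : forall z, In z (u :: p) -> vtx T z -> z = u \/ z = t).
        { intros z [<-|Hz] HzT; auto. apply Hi in Hz. apply in_app_or in Hz.
          destruct Hz as [Hz|[<-|[]]]; auto. rewrite Forall_forall in Hm. exfalso; apply (Hm z Hz HzT). }
        destruct (Hw x Hx HTx) as [->| ->]; destruct (Hw y Hy HTy) as [->| ->]; try congruence.
        apply He. apply wfT. exact HT.
    - split; auto. rewrite (@last_cons_d V u u p). exact Hl. }
  destruct Hcomp as [Hc1|Hc1]; [left|right]; eapply tle_pre; eauto.
Qed.


Lemma step_pre cp a' lu lt t : pre (cp ++ [a']) lu -> (pre lu lt \/ pre lt lu) ->
  Pth T r t lt -> ~ In t cp -> pre (cp ++ [a']) lt.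
Proof.
  intros HQ Hc Pt Ht. destruct Hc as [Hc|Hc]. eapply pre_trans; eauto.
  destruct (pre_comp HQ Hc) as [H1|[k Hk]]; auto.
  assert (Hin := Pth_in Pt).
  symmetry in Hk. apply app_eq_app in Hk. destruct Hk as [m [[E1 E2]|[E1 E2]]].
  - destruct m as [|m0 m]. rewrite app_nil_r in E1. subst. contradiction.
    destruct m as [|m1 m].
    + simpl in E2. injection E2 as E3 E4. subst. exists []. rewrite app_nil_r; auto.
    + simpl in E2. inversion E2.
  - exfalso. apply Ht. rewrite E1. apply in_or_app; auto.
Qed.

Lemma walk_pre cp a' : forall n w u, length w <= n -> chain (edg H) (u :: w) ->
  Forall (vtx H) (u :: w) -> vtx T u -> vtx T (last w u) ->
  (forall z, In z (u :: w) -> ~ In z cp) ->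
  forall lu lv, Pth T r u lu -> pre (cp ++ [a']) lu -> Pth T r (last w u) lv -> pre (cp ++ [a']) lv.
Proof.
  induction n as [|n IH]; intros w u Hl Hc Hf Hu Hv Hz lu lv Pu HQ Pv.
  - destruct w; [|simpl in Hl; lia]. simpl in Pv. rewrite (Pth_uniq wfT treeT Pv Pu). exact HQ.
  - destruct w as [|w0 w']. simpl in Pv. rewrite (Pth_uniq wfT treeT Pv Pu). exact HQ.
    set (w := w0 :: w') in *.
    destruct (@first_split V (vtx T) w) as [mid [t [rest [Ew [Ht Fm]]]]].
    { exists (last w u). split; auto. apply last_in. unfold w; congruence. }
    assert (Hlast : last w u = last rest t) by (rewrite Ew, last_app_gen, last_cons_d; reflexivity).
    assert (Hlen : length rest <= n) by (rewrite Ew, length_app in Hl; simpl in Hl; lia).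
    assert (Hc2 : chain (edg H) (t :: rest)).
    { rewrite Ew in Hc. change (chain (edg H) ((u :: mid) ++ t :: rest)) in Hc.
      apply chain_app_r in Hc. exact Hc. }
    assert (Hf2 : Forall (vtx H) (t :: rest)).
    { rewrite Ew in Hf. change (Forall (vtx H) ((u :: mid) ++ t :: rest)) in Hf.
      apply Forall_app in Hf. tauto. }
    assert (Hz2 : forall z, In z (t :: rest) -> ~ In z cp).
    { intros z Hz'. apply Hz. right. rewrite Ew. apply in_or_app. right. exact Hz'. }
    rewrite Hlast in Hv, Pv.
    assert (Hex : exists l, Pth T r t l) by (eapply Pth_ex; eauto). destruct Hex as [lt Pt].
    destruct (classic (u = t)) as [<-|Hne].
    + exact (IH rest u Hlen Hc2 Hf2 Ht Hv Hz2 lu lv Pu HQ Pv).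
    + apply (IH rest t Hlen Hc2 Hf2 Ht Hv Hz2 lt lv Pt); auto.
      eapply step_pre; eauto.
      * eapply seg_pre with (mid := mid); eauto.
        { rewrite Ew in Hc. replace (u :: mid ++ t :: rest) with ((u :: mid ++ [t]) ++ rest) in Hc
            by (simpl; rewrite <- app_assoc; reflexivity). apply chain_app_l in Hc. exact Hc. }
        { rewrite Ew in Hf. replace (u :: mid ++ t :: rest) with ((u :: mid ++ [t]) ++ rest) in Hf
            by (simpl; rewrite <- app_assoc; reflexivity). apply Forall_app in Hf. tauto. }
      * apply Hz2. left; auto.
Qed.

End W.

Section D.
Variable V : Type.

Lemma pigeon (f : nat -> list V) :
  (forall i j, i <> j -> forall x, In x (inner (f i)) -> ~ In x (inner (f j))) ->
  forall L n, exists i, n <= i /\ forall c, In c L -> ~ In c (inner (f i)).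
Proof.
  intros Hd L. induction L as [|c L IH]; intro n.
  - exists n. split; auto.
  - destruct (IH n) as [i1 [Hi1 H1]].
    destruct (classic (In c (inner (f i1)))) as [Hc|Hc].
    + destruct (IH (S i1)) as [i2 [Hi2 H2]]. exists i2. split. lia.
      intros c' [<-|Hc']; auto. apply (Hd i1 i2). lia. exact Hc.
    + exists i1. split; auto. intros c' [<-|Hc']; auto.
Qed.

Variables G H : graph V.
Hypothesis wfH : wf_graph H.
Hypothesis wca : well_connected_adhesion G H.
Variable cp : list V.

Lemma build : forall n s x, length s <= n -> chain (edg G) (x :: s) -> NoDup (x :: s) ->
  Forall (vtx G) (x :: s) -> vtx H x -> vtx H (last s x) ->
  (forall z, In z (x :: s) -> ~ In z cp) ->
  exists w, chain (edg H) (x :: w) /\ Forall (vtx H) (x :: w) /\ last w x = last s x /\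
    (forall z, In z (x :: w) -> ~ In z cp).
Proof.
  induction n as [|n IH]; intros s x Hl Hc Hd Hf Hx Hy Hz.
  { destruct s; [|simpl in Hl; lia]. exists []. repeat split; auto. }
  destruct s as [|s0 s']. { exists []. repeat split; auto. }
  set (s := s0 :: s') in *.
  destruct (@first_split V (vtx H) s) as [mid [y [rest [Es [Hyy Fm]]]]].
  { exists (last s x). split; auto. apply last_in. unfold s; congruence. }
  assert (Hlast : last s x = last rest y) by (rewrite Es, last_app_gen, last_cons_d; reflexivity).
  assert (Hlen : length rest <= n) by (rewrite Es, length_app in Hl; simpl in Hl; lia).
  rewrite Es in Hc, Hd, Hf, Hz.
  replace (x :: mid ++ y :: rest) with ((x :: mid ++ [y]) ++ rest) in Hc, Hd, Hf, Hz
    by (simpl; rewrite <- app_assoc; reflexivity).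
  assert (Hc1 : chain (edg G) (x :: mid ++ [y])) by (eapply chain_app_l; exact Hc).
  assert (Hd1 := NoDup_app_remove_r _ _ Hd).
  assert (Hf1 : Forall (vtx G) (x :: mid ++ [y])) by (apply Forall_app in Hf; tauto).
  assert (Hz1 : forall z, In z (x :: mid ++ [y]) -> ~ In z cp) by (intros z Hz'; apply Hz; apply in_or_app; auto).
  replace ((x :: mid ++ [y]) ++ rest) with ((x :: mid) ++ y :: rest) in Hc, Hd, Hf, Hz
    by (simpl; rewrite <- app_assoc; reflexivity).
  assert (Hc2 : chain (edg G) (y :: rest)) by (eapply chain_app_r; exact Hc).
  assert (Hd2 := NoDup_app_remove_l _ _ Hd).
  assert (Hf2 : Forall (vtx G) (y :: rest)) by (apply Forall_app in Hf; tauto).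
  assert (Hz2 : forall z, In z (y :: rest) -> ~ In z cp) by (intros z Hz'; apply Hz; apply in_or_app; auto).
  rewrite Hlast in Hy.
  destruct (IH rest y Hlen Hc2 Hd2 Hf2 Hyy Hy Hz2) as [w2 [Cw2 [Fw2 [Lw2 Zw2]]]].
  assert (Hseg : exists f', chain (edg H) (x :: f') /\ Forall (vtx H) (x :: f') /\
      last f' x = y /\ forall z, In z (x :: f') -> ~ In z cp).
  { destruct (classic (mid = [] /\ edg H x y)) as [[-> He]|Hne].
    - exists [y]. repeat split; auto.
    - assert (HP : H_path G H (x :: mid ++ [y])).
      { split; [split; [congruence|split; [exact Hd1|split; [exact Hf1|exact Hc1]]]|].
        split; [simpl; rewrite length_app; simpl; lia|].
        split; [|split].
        - intros a b [Ha Hb]. simpl in Ha. injection Ha as <-.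
          rewrite last_cons_d, last_app_gen in Hb. simpl in Hb. subst b. auto.
        - intros z Hz'. unfold inner in Hz'. simpl in Hz'. rewrite removelast_last in Hz'.
          rewrite Forall_forall in Fm. apply Fm; auto.
        - destruct mid as [|m mid'].
          + simpl. split; auto.
          + apply chain_mono with (R := fun u v => ~ vtx H u \/ ~ vtx H v).
            intros u v [Hu|Hv] He; apply wfH in He; tauto.
            apply chain_mid; auto. congruence. }
      assert (HE : ends (x :: mid ++ [y]) x y)
        by (split; [reflexivity| rewrite last_cons_d, last_app_gen; reflexivity]).
      destruct (wca HP HE) as [f [Hfp Hfd]].
      assert (Hfd' : forall i j, i <> j -> forall z, In z (inner (f i)) -> ~ In z (inner (f j)))
        by (intros i j Hij; apply (Hfd i j Hij)).
      destruct (pigeon f Hfd' cp 0) as [i [_ Hi]].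
      destruct (Hfp i) as [[Pn [Pd [Pf Pc]]] [Ph Pl]].
      destruct (f i) as [|x0 f'] eqn:Ef; [congruence|]. simpl in Ph. injection Ph as ->.
      exists f'. repeat split; auto.
      + rewrite last_cons_d in Pl. exact Pl.
      + intros z Hz' Hzc. assert (HE' : ends (x :: f') x y) by (split; auto).
        destruct (in_ends z HE' Hz') as [->|[->|Hin]].
        apply (Hz1 x); simpl; auto. apply (Hz1 y); auto. simpl. right. apply in_or_app; simpl; auto.
        apply (Hi z Hzc). exact Hin. }
  destruct Hseg as [f' [Cf [Ff [Lf Zf]]]].
  exists (f' ++ w2). repeat split.
  - change (chain (edg H) ((x :: f') ++ w2)). apply chain_app2 with (d := x). congruence. exact Cf.
    rewrite last_cons_d, Lf. exact Cw2.
  - change (Forall (vtx H) ((x :: f') ++ w2)). apply Forall_app. split; auto. inversion Fw2; auto.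
  - rewrite last_app_gen, Lf, Lw2, Hlast. reflexivity.
  - intros z Hz'. change (In z ((x :: f') ++ w2)) in Hz'. apply in_app_or in Hz'.
    destruct Hz' as [Hz'|Hz']; [apply Zf|apply Zw2; right]; auto.
Qed.

End D.
Unset Implicit Arguments.

Theorem lemma3p1 (V : Type) (G H T : graph V) (r : V) :
  wf_graph G -> wf_graph H -> subgraph H G ->
  well_connected_adhesion G H ->
  wf_graph T -> subgraph T H -> is_tree T -> vtx T r ->
  normal_in H T r ->
  normal_in G T r.
Proof.
  intros wfG wfH sHG wca wfT sTH treeT rT normH p a b HP E.
  destruct (classic (comparable T r a b)) as [Hc|Hnc]; auto. exfalso.
  destruct HP as [[Pn [Pd [Pf Pc]]] [Plen [Pends [Pinn Pch]]]].
  destruct (Pends a b E) as [Ha Hb].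
  destruct (Pth_ex r treeT rT a Ha) as [la Pa].
  destruct (Pth_ex r treeT rT b Hb) as [lb Pb].
  assert (N1 : ~ pre la lb) by (intro Hp; apply Hnc; left; eapply pre_tle; eauto).
  assert (N2 : ~ pre lb la) by (intro Hp; apply Hnc; right; eapply pre_tle; eauto).
  destruct (not_pre_split N1 N2) as [cp [a' [b' [r1 [r2 [Ea [Eb Hab]]]]]]].
  assert (HcpT : forall z, In z cp -> vtx T z).
  { intros z Hz. destruct Pa as [[_ [_ [Fa _]]] _]. rewrite Forall_forall in Fa. apply Fa.
    rewrite Ea. apply in_or_app; auto. }
  assert (Hacp : ~ In a cp).
  { intro Hin. apply Hnc. left. exists lb. destruct Pb as [P1 P2]. split; auto. split; auto.
    rewrite Eb. apply in_or_app; auto. }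
  assert (Hbcp : ~ In b cp).
  { intro Hin. apply Hnc. right. exists la. destruct Pa as [P1 P2]. split; auto. split; auto.
    rewrite Ea. apply in_or_app; auto. }
  assert (Hpcp : forall z, In z p -> ~ In z cp).
  { intros z Hz Hzc. destruct (in_ends z E Hz) as [->|[->|Hin]]; auto.
    apply (Pinn z Hin). apply HcpT; auto. }
  destruct p as [|a0 s]; [congruence|].
  destruct E as [Eh El]. simpl in Eh. injection Eh as ->.
  rewrite last_cons_d in El.
  destruct (build wfH wca cp (n := length s) (s := s) (x := a) (le_n _) Pc Pd Pf)
    as [w [Cw [Fw [Lw Zw]]]].
  - apply (proj1 sTH); auto.
  - rewrite El. apply (proj1 sTH); auto.
  - exact Hpcp.
  - rewrite El in Lw.
    assert (HQ : pre (cp ++ [a']) la) by (exists r1; rewrite Ea, <- app_assoc; reflexivity).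
    rewrite <- Lw in Pb.
    assert (Hb' : vtx T (last w a)) by (rewrite Lw; exact Hb).
    destruct (walk_pre wfH wfT treeT normH rT cp a' (n := length w) (le_n _) Cw Fw Ha Hb' Zw Pa HQ Pb)
      as [k Hk].
    rewrite Eb, <- app_assoc in Hk. apply app_inv_head in Hk. simpl in Hk. injection Hk as Hk _.
    congruence.
Qed.
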